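(* For $x\in(0,\pi/2)$, \begin{align*} \cos^{1/3}x&<\left(1-\tfrac8{15}\ln(\cos x)\right)^{-5/8}<\left(\tfrac83-\tfrac53\cos^{1/5}x\right)^{-1}<\exp\left(\tfrac58\cos^{8/15}x-\tfrac58\right)\\ &<\left(\tfrac5{21}\cos^{7/10}x+\tfrac{16}{21}\right)^2<\left(\tfrac13\cos^{4/5}x+\tfrac23\right)^{5/4}<\tfrac5{13}\cos^{13/15}x+\tfrac8{13}\\ &<\left(\tfrac{23}{51}\cos^{34/35}x+\tfrac{28}{51}\right)^{35/46}<\frac{\sin x}{x}<\left(\tfrac7{15}\cos x+\tfrac8{15}\right)^{5/7}<\sqrt{\tfrac59\cos^{6/5}x+\tfrac49}<\frac{2+\cos x}{3}. \end{align*} *)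

(* Defs.v *)
From Stdlib Require Import Reals.
Open Scope R_scope.

(* Main.v *)
Require Import Defs.
From Stdlib Require Import Reals Lra.
From Coquelicot Require Import Coquelicot.
Open Scope R_scope.

Lemma incr (f f' : R -> R) (a b : R) : a < b ->
  (forall t, a <= t <= b -> is_derive f t (f' t)) ->
  (forall t, a < t < b -> 0 < f' t) -> f a < f b.
Proof.
  intros hab hd hp.
  destruct (MVT_cor2 f f' a b hab) as [c [hc1 hc2]].
  { intros t ht. apply is_derive_Reals. auto. }
  assert (0 < f' c * (b - a)) by (apply Rmult_lt_0_compat; [apply hp; auto | lra]).
  lra.
Qed.

Lemma trig_facts t : 0 < t < PI/2 -> 0 < sin t /\ 0 < cos t /\ cos t < 1 /\ sin t ^ 2 + cos t ^ 2 = 1.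
Proof.
  intros ht. pose proof PI_RGT_0.
  split. apply sin_gt_0; lra.
  split. apply cos_gt_0; lra.
  split. rewrite <- cos_0. apply cos_decreasing_1; lra.
  pose proof (sin2_cos2 t). unfold Rsqr in H0. lra.
Qed.

Lemma TT t : 0 < t < PI/2 -> t * cos t < sin t.
Proof.
  intros ht.
  assert ((fun w => sin w - w * cos w) 0 < (fun w => sin w - w * cos w) t).
  { apply (incr (fun w => sin w - w * cos w) (fun w => w * sin w)). lra.
    - intros; auto_derive; auto; ring.
    - intros w hw. destruct (trig_facts w) as [? _]. lra. nra. }
  simpl in H. rewrite sin_0 in H. lra.
Qed.

Lemma GG t : 0 < t < PI/2 -> 0 < 2 - 2 * cos t - t * sin t.
Proof.
  intros ht.
  assert ((fun w => 2 - 2 * cos w - w * sin w) 0 < (fun w => 2 - 2 * cos w - w * sin w) t).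
  { apply (incr (fun w => 2 - 2 * cos w - w * sin w) (fun w => sin w - w * cos w)). lra.
    - intros; auto_derive; auto; ring.
    - intros w hw. pose proof (TT w). lra. }
  simpl in H. rewrite sin_0, cos_0 in H. lra.
Qed.

Lemma SS t : 0 < t < PI/2 -> 3 * sin t < t * (2 + cos t).
Proof.
  intros ht.
  assert ((fun w => w * (2 + cos w) - 3 * sin w) 0 < (fun w => w * (2 + cos w) - 3 * sin w) t).
  { apply (incr (fun w => w * (2 + cos w) - 3 * sin w) (fun w => 2 - 2 * cos w - w * sin w)). lra.
    - intros; auto_derive; auto; ring.
    - intros w hw. pose proof (GG w). lra. }
  simpl in H. rewrite sin_0 in H. lra.
Qed.

Lemma RR t : 0 < t < PI/2 -> t * (2 * cos t ^ 2 + 8 * cos t + 5) < sin t * (7 * cos t + 8).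
Proof.
  intros ht.
  set (f := fun w => sin w * (7 * cos w + 8) - w * (2 * cos w ^ 2 + 8 * cos w + 5)).
  assert (f 0 < f t).
  { apply (incr f (fun w => 4 * sin w * (w * (2 + cos w) - 3 * sin w))). lra.
    - intros w hw. unfold f. auto_derive; auto.
      pose proof (sin2_cos2 w). unfold Rsqr in H. nra.
    - intros w hw. pose proof (SS w). destruct (trig_facts w) as [? _]. lra.
      apply Rmult_lt_0_compat; lra. }
  unfold f in H. rewrite sin_0 in H. lra.
Qed.

Lemma VV t : 0 < t < PI/2 ->
  sin t * (23 * cos t ^ 2 + 54 * cos t + 28) < 3 * t * (2 * cos t ^ 3 + 12 * cos t ^ 2 + 15 * cos t + 6).
Proof.
  intros ht.
  set (f := fun w => 3 * w * (2 * cos w ^ 3 + 12 * cos w ^ 2 + 15 * cos w + 6) - sin w * (23 * cos w ^ 2 + 54 * cos w + 28)).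
  assert (f 0 < f t).
  { apply (incr f (fun w => 9 * sin w * (sin w * (7 * cos w + 8) - w * (2 * cos w ^ 2 + 8 * cos w + 5)))). lra.
    - intros w hw. unfold f. auto_derive; auto.
      pose proof (sin2_cos2 w). unfold Rsqr in H.
      assert (cos w * (sin w * sin w + cos w * cos w) = cos w * 1) by (rewrite H; ring).
      lra.
    - intros w hw. pose proof (RR w). destruct (trig_facts w) as [? _]. lra.
      apply Rmult_lt_0_compat; lra. }
  unfold f in H. rewrite sin_0 in H. lra.
Qed.

Lemma pade d : 0 < d -> d <= 1 -> d * (34 * d^35 + 36) <= 36 * d^35 + 34.
Proof.
  intros h0 h1.
  assert (e : 36 * d^35 + 34 - d * (34 * d^35 + 36) = (1 - d)^3 * (34 + d * (66 + d * (96 + d * (124 + d * (150 + d * (174 + d * (196 + d * (216 + d * (234 + d * (250 + d * (264 + d * (276 + d * (286 + d * (294 + d * (300 + d * (304 + d * (306 + d * (306 + d * (304 + d * (300 + d * (294 + d * (286 + d * (276 + d * (264 + d * (250 + d * (234 + d * (216 + d * (196 + d * (174 + d * (150 + d * (124 + d * (96 + d * (66 + d * 34)))))))))))))))))))))))))))))))))) by ring.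
  assert (0 <= (34 + d * (66 + d * (96 + d * (124 + d * (150 + d * (174 + d * (196 + d * (216 + d * (234 + d * (250 + d * (264 + d * (276 + d * (286 + d * (294 + d * (300 + d * (304 + d * (306 + d * (306 + d * (304 + d * (300 + d * (294 + d * (286 + d * (276 + d * (264 + d * (250 + d * (234 + d * (216 + d * (196 + d * (174 + d * (150 + d * (124 + d * (96 + d * (66 + d * 34)))))))))))))))))))))))))))))))))) by (repeat (apply Rplus_le_le_0_compat || apply Rmult_le_pos); lra).
  assert (0 <= (1-d)^3) by (apply pow_le; lra).
  assert (0 <= (1 - d)^3 * (34 + d * (66 + d * (96 + d * (124 + d * (150 + d * (174 + d * (196 + d * (216 + d * (234 + d * (250 + d * (264 + d * (276 + d * (286 + d * (294 + d * (300 + d * (304 + d * (306 + d * (306 + d * (304 + d * (300 + d * (294 + d * (286 + d * (276 + d * (264 + d * (250 + d * (234 + d * (216 + d * (196 + d * (174 + d * (150 + d * (124 + d * (96 + d * (66 + d * 34)))))))))))))))))))))))))))))))))) by (apply Rmult_le_pos; auto).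
  lra.
Qed.

Lemma exp_pow_nat (y : R) (n : nat) : exp y ^ n = exp (INR n * y).
Proof. rewrite <- Rpower_pow by apply exp_pos. unfold Rpower. rewrite ln_exp. reflexivity. Qed.

Lemma exp_ge z : 1 + z <= exp z.
Proof. destruct (Req_dec z 0) as [e|e]. rewrite e, exp_0; lra. left; apply exp_ineq1; auto. Qed.

Lemma ln_ge y : 0 < y -> 1 - / y <= ln y.
Proof.
  intros hy. assert (ln (/ y) <= / y - 1).
  { rewrite <- (ln_exp (/y - 1)). destruct (exp_ge (/y - 1)) as [h|h].
    left; apply ln_increasing; auto. apply Rinv_0_lt_compat; auto. lra.
    right. f_equal. lra. }
  rewrite ln_Rinv in H by auto. lra.
Qed.

Definition P10 (w : R) := 5/7 * ln (7/15 * cos w + 8/15) - ln (sin w) + ln w.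

Lemma P10_incr a b : 0 < a -> a < b -> b < PI/2 -> P10 a < P10 b.
Proof.
  intros ha hab hb.
  apply (incr P10 (fun w => (sin w * (7 * cos w + 8) - w * (2 * cos w ^ 2 + 8 * cos w + 5)) / (w * sin w * (7 * cos w + 8)))); auto.
  - intros w hw. destruct (trig_facts w) as [hs [hc [hc1 hsc]]]. lra.
    unfold P10. auto_derive. repeat split; lra.
    field_simplify_eq. assert (w * (sin w ^ 2 + cos w ^ 2) = w * 1) by (rewrite hsc; ring). lra. repeat split; lra.
  - intros w hw. destruct (trig_facts w) as [hs [hc [hc1 hsc]]]. lra.
    pose proof (RR w). apply Rdiv_lt_0_compat. lra.
    apply Rmult_lt_0_compat. nra. lra.
Qed.

Lemma small_a (x eps : R) : 0 < x -> 0 < eps -> exists a, 0 < a /\ a < x /\ a <= 1/2 /\ a <= eps.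
Proof.
  intros. exists (Rmin (x/2) (Rmin eps (1/2))).
  unfold Rmin. repeat destruct Rle_dec; lra.
Qed.

Lemma le_of_gt_eps (y : R) : (forall eps, 0 < eps -> - eps < y) -> 0 <= y.
Proof.
  intros h. destruct (Rle_dec 0 y) as [|n]; auto.
  specialize (h (- y / 2) ltac:(lra)). lra.
Qed.

Lemma upper x : 0 < x < PI/2 -> sin x / x < Rpower (7/15 * cos x + 8/15) (5/7).
Proof.
  intros hx.
  destruct (trig_facts x hx) as [hs [hc [hc1 hsc]]].
  assert (h0 : 0 <= P10 (x/2)).
  { apply le_of_gt_eps. intros eps heps.
    destruct (small_a (x/2) eps) as [a [ha1 [ha2 [ha3 ha4]]]]; try lra.
    assert (P10 a < P10 (x/2)) by (apply P10_incr; lra).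
    destruct (trig_facts a) as [hsa [hca [hca1 hsca]]]. lra.
    pose proof (sin_lt_x a ha1).
    assert (ln (sin a) < ln a) by (apply ln_increasing; lra).
    pose proof (ln_ge (7/15 * cos a + 8/15) ltac:(lra)).
    assert (1 - cos a <= a^2) by nra.
    assert (1 - / (7/15 * cos a + 8/15) >= -(7/8) * a^2).
    { replace (1 - / (7/15 * cos a + 8/15)) with (-(7/15) * (1 - cos a) * / (7/15 * cos a + 8/15)) by (field; lra).
      assert (/ (7/15 * cos a + 8/15) <= / (8/15)) by (apply Rinv_le_contravar; lra).
      replace (/ (8/15)) with (15/8) in H4 by field.
      assert (0 < / (7/15 * cos a + 8/15)) by (apply Rinv_0_lt_compat; lra).
      nra. }
    unfold P10 in *. nra. }
  assert (P10 (x/2) < P10 x) by (apply P10_incr; lra).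
  unfold P10 in *.
  unfold Rpower. rewrite <- (exp_ln (sin x / x)) by (apply Rdiv_lt_0_compat; lra).
  apply exp_increasing. unfold Rdiv. rewrite ln_mult, ln_Rinv by (try apply Rinv_0_lt_compat; lra). lra.
Qed.

Definition P8 (w : R) := ln (sin w) - ln w - 35/46 * ln (23/51 * exp (34/35 * ln (cos w)) + 28/51).

Lemma D8_pos w : 0 < w < PI/2 ->
  0 < cos w / sin w - 1 / w + 17 * exp (34/35 * ln (cos w)) * sin w / (cos w * (23 * exp (34/35 * ln (cos w)) + 28)).
Proof.
  intros hw. destruct (trig_facts w hw) as [hs [hc [hc1 hsc]]].
  set (c := cos w) in *. set (s := sin w) in *.
  set (E := exp (34/35 * ln c)).
  set (d := exp (1/35 * ln c)).
  assert (hl : ln c < 0) by (rewrite <- ln_1; apply ln_increasing; lra).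
  assert (hd0 : 0 < d) by apply exp_pos.
  assert (hd1 : d < 1) by (rewrite <- exp_0; apply exp_increasing; lra).
  assert (hE : E = d^34).
  { unfold d, E. rewrite exp_pow_nat. f_equal. rewrite INR_IZR_INZ. simpl. field. }
  assert (hcd : c = d^35).
  { unfold d. rewrite exp_pow_nat, INR_IZR_INZ. simpl. replace (35 * (1/35 * ln c)) with (ln c) by field.
    rewrite exp_ln; lra. }
  assert (hpade : d * (34 * c + 36) <= 36 * c + 34) by (rewrite hcd; apply pade; lra).
  assert (hcdE : c = d * E) by (rewrite hE, hcd; ring).
  assert (hE0 : 0 < E) by apply exp_pos.
  replace (17 * E * s / (c * (23 * E + 28))) with (17 * s / (23 * c + 28 * d))
    by (rewrite hcdE; field; split; nra).
  set (A := 23 * c^2 + 54 * c + 28).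
  set (B := 2 * c^3 + 12 * c^2 + 15 * c + 6).
  assert (hA : 0 < A) by (unfold A; nra).
  assert (h1 : s * (17 * c + 18) / A <= 17 * s / (23 * c + 28 * d)).
  { apply Rmult_le_reg_r with (A * (23 * c + 28 * d)). nra.
    replace (s * (17 * c + 18) / A * (A * (23 * c + 28 * d))) with (s * ((17 * c + 18) * (23 * c + 28 * d))) by (field; lra).
    replace (17 * s / (23 * c + 28 * d) * (A * (23 * c + 28 * d))) with (s * (17 * A)) by (field; nra).
    apply Rmult_le_compat_l. lra. unfold A. nra. }
  assert (h2 : 0 < c / s - 1 / w + s * (17 * c + 18) / A).
  { replace (c / s - 1 / w + s * (17 * c + 18) / A) with ((3 * w * B - s * A) / (w * s * A)).
    - apply Rdiv_lt_0_compat. pose proof (VV w hw). fold c s in H. unfold A, B. lra.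
      apply Rmult_lt_0_compat; nra.
    - field_simplify_eq. unfold A, B.
      assert (w * c * (s^2 + c^2) = w * c * 1) by (rewrite hsc; ring).
      assert (w * (s^2 + c^2) = w * 1) by (rewrite hsc; ring).
      assert (w * c^2 * (s^2 + c^2) = w * c^2 * 1) by (rewrite hsc; ring).
      lra. repeat split; lra. }
  lra.
Qed.

Lemma P8_incr a b : 0 < a -> a < b -> b < PI/2 -> P8 a < P8 b.
Proof.
  intros ha hab hb.
  apply (incr P8 (fun w => cos w / sin w - 1 / w + 17 * exp (34/35 * ln (cos w)) * sin w / (cos w * (23 * exp (34/35 * ln (cos w)) + 28)))); auto.
  - intros w hw. destruct (trig_facts w) as [hs [hc [hc1 hsc]]]. lra.
    pose proof (exp_pos (34/35 * ln (cos w))).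
    unfold P8. auto_derive. repeat split; try lra.
    field. repeat split; lra.
  - intros w hw. apply D8_pos. lra.
Qed.

Lemma lower x : 0 < x < PI/2 -> Rpower (23/51 * Rpower (cos x) (34/35) + 28/51) (35/46) < sin x / x.
Proof.
  intros hx.
  destruct (trig_facts x hx) as [hs [hc [hc1 hsc]]].
  assert (h0 : 0 <= P8 (x/2)).
  { apply le_of_gt_eps. intros eps heps.
    destruct (small_a (x/2) eps) as [a [ha1 [ha2 [ha3 ha4]]]]; try lra.
    assert (P8 a < P8 (x/2)) by (apply P8_incr; lra).
    destruct (trig_facts a) as [hsa [hca [hca1 hsca]]]. lra.
    pose proof (sin_lt_x a ha1).
    pose proof (TT a ltac:(lra)).
    assert (ln (a * cos a) < ln (sin a)) by (apply ln_increasing; nra).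
    rewrite ln_mult in H2 by lra.
    assert (hl : ln (cos a) < 0) by (rewrite <- ln_1; apply ln_increasing; lra).
    assert (exp (34/35 * ln (cos a)) < 1) by (rewrite <- exp_0; apply exp_increasing; nra).
    pose proof (exp_pos (34/35 * ln (cos a))).
    assert (ln (23/51 * exp (34/35 * ln (cos a)) + 28/51) < 0) by (rewrite <- ln_1; apply ln_increasing; lra).
    pose proof (ln_ge (cos a) hca).
    assert (1 - cos a <= a^2) by nra.
    assert (3/4 <= cos a) by nra.
    assert (1 - / cos a >= -(4/3) * a^2).
    { replace (1 - / cos a) with (-(1 - cos a) * / cos a) by (field; lra).
      assert (/ cos a <= / (3/4)) by (apply Rinv_le_contravar; lra).
      replace (/ (3/4)) with (4/3) in H8 by field.
      assert (0 < / cos a) by (apply Rinv_0_lt_compat; lra).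
      nra. }
    unfold P8 in *. nra. }
  assert (P8 (x/2) < P8 x) by (apply P8_incr; lra).
  unfold P8 in *.
  unfold Rpower at 1. unfold Rpower at 1.
  rewrite <- (exp_ln (sin x / x)) by (apply Rdiv_lt_0_compat; lra).
  apply exp_increasing. unfold Rdiv. rewrite ln_mult, ln_Rinv by (try apply Rinv_0_lt_compat; lra). lra.
Qed.
Definition H (q v : R) := 1 + 8/15 * (exp (q*v) - 1) / q.
Definition Fam (q v : R) := (1 - 8/(15*q)) * exp (-(q*v)) + 8/(15*q).
Definition Phi (q v : R) := 5/(15*q-8) * ln (Fam q v).

Lemma H_ge1 q v : 0 < q -> 0 <= v -> 1 <= H q v.
Proof.
  intros hq hv. unfold H.
  assert (1 <= exp (q*v)).
  { destruct (Req_dec (q*v) 0) as [e|e]. rewrite e, exp_0; lra.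
    left. pose proof (exp_ineq1 (q*v) e). nra. }
  assert (0 <= 8/15*(exp (q*v) - 1) / q). { apply Rmult_le_pos. nra. left; apply Rinv_0_lt_compat; lra. }
  lra.
Qed.

Lemma Fam_eq q v : 0 < q -> Fam q v = H q v * exp (-(q*v)).
Proof.
  intros hq. unfold Fam, H. rewrite exp_Ropp. field.
  split. apply Rgt_not_eq, exp_pos. lra.
Qed.

Lemma Fam_pos q v : 0 < q -> 0 <= v -> 0 < Fam q v.
Proof.
  intros. rewrite Fam_eq by auto. apply Rmult_lt_0_compat. pose proof (H_ge1 q v); lra. apply exp_pos.
Qed.

Lemma exp_ge1 y : 0 <= y -> 1 <= exp y.
Proof.
  intros hy. destruct (Req_dec y 0) as [e|e]. rewrite e, exp_0; lra.
  left. pose proof (exp_ineq1 y e). lra.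
Qed.

Lemma Phi_der q v : 0 < q -> 15*q-8 <> 0 -> 0 <= v -> is_derive (Phi q) v (-(1/3) / H q v).
Proof.
  intros hq hq8 hv.
  pose proof (Fam_pos q v hq hv) as hF.
  pose proof (Fam_eq q v hq) as hE.
  pose proof (exp_ge1 (q*v) ltac:(nra)).
  pose proof (exp_pos (q*v)).
  unfold Phi. unfold Fam in *. auto_derive.
  - exact hF.
  - rewrite hE. unfold H in *. rewrite exp_Ropp. field.
    repeat split; lra.
Qed.

Lemma inv_lt1 y : 1 < y -> / y < 1.
Proof. intros. apply (Rmult_lt_reg_r y); [lra|]. rewrite Rinv_l; lra. Qed.

Lemma H_mono p q v : 0 < p -> p < q -> 0 < v -> H p v < H q v.
Proof.
  intros hp hpq hv.
  set (g := fun w => (exp (q*w) - 1)/q - (exp (p*w) - 1)/p).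
  assert (g 0 < g v).
  { apply (incr g (fun w => exp (q*w) - exp (p*w))); auto.
    - intros t ht. unfold g. auto_derive. auto. field. lra.
    - intros t ht. assert (p*t < q*t) by nra. pose proof (exp_increasing _ _ H0). lra. }
  unfold g in H0. rewrite !Rmult_0_r, exp_0 in H0. unfold H.
  replace ((1 - 1) / q - (1 - 1) / p) with 0 in H0 by (field; lra).
  unfold Rdiv in *. nra.
Qed.

Lemma H0_lt q v : 0 < q -> 0 < v -> 1 + 8/15*v < H q v.
Proof.
  intros hq hv. unfold H. pose proof (exp_ineq1 (q*v) ltac:(nra)).
  assert (v < (exp (q*v) - 1)/q). { apply (Rmult_lt_reg_r q); auto. unfold Rdiv. rewrite Rmult_assoc, Rinv_l by lra. lra. }
  unfold Rdiv in *. lra.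
Qed.

Definition Phi0 (v : R) := -(5/8) * ln (1 + 8/15*v).
Definition PhiE (v : R) := 5/8 * exp (-(8/15*v)) - 5/8.

Lemma Phi0_der v : 0 <= v -> is_derive Phi0 v (-(1/3) / (1 + 8/15*v)).
Proof. intros hv. unfold Phi0. auto_derive. lra. field. lra. Qed.

Lemma PhiE_der v : 0 <= v -> is_derive PhiE v (-(1/3) / H (8/15) v).
Proof. intros hv. unfold PhiE, H. auto_derive. auto. rewrite exp_Ropp. field.
  pose proof (exp_pos (8/15*v)). lra. Qed.

Lemma cmp (f g hf hg : R -> R) u : 0 < u -> f 0 = 0 -> g 0 = 0 ->
  (forall v, 0 <= v -> is_derive f v (-(1/3) / hf v)) ->
  (forall v, 0 <= v -> is_derive g v (-(1/3) / hg v)) ->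
  (forall v, 0 < v -> 0 < hf v < hg v) -> f u < g u.
Proof.
  intros hu f0 g0 df dg hh.
  assert ((fun w => g w - f w) 0 < (fun w => g w - f w) u).
  { apply (incr (fun w => g w - f w) (fun w => -(1/3)/hg w - -(1/3)/hf w)); auto.
    - intros t ht. apply (is_derive_minus (fun w => g w) (fun w => f w)); [apply dg|apply df]; lra.
    - intros t ht. destruct (hh t ltac:(lra)).
      assert (/ hg t < / hf t) by (apply Rinv_lt_contravar; nra).
      unfold Rdiv. lra. }
  simpl in H0. lra.
Qed.

Lemma Phi_0 q : 0 < q -> Phi q 0 = 0.
Proof. intros. unfold Phi, Fam. rewrite Rmult_0_r, Ropp_0, exp_0.
  replace ((1 - 8 / (15 * q)) * 1 + 8 / (15 * q)) with 1 by (field; lra). rewrite ln_1; ring. Qed.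
Lemma Phi0_0 : Phi0 0 = 0.
Proof. unfold Phi0. rewrite Rmult_0_r, Rplus_0_r, ln_1; ring. Qed.
Lemma PhiE_0 : PhiE 0 = 0.
Proof. unfold PhiE. rewrite Rmult_0_r, Ropp_0, exp_0; ring. Qed.

Lemma cmpPP p q u : 0 < p -> p < q -> 15*p-8 <> 0 -> 15*q-8 <> 0 -> 0 < u -> Phi p u < Phi q u.
Proof.
  intros. apply (cmp _ _ (H p) (H q)); try lra.
  - apply Phi_0; lra.
  - apply Phi_0; lra.
  - intros; apply Phi_der; lra.
  - intros; apply Phi_der; lra.
  - intros. pose proof (H_ge1 p v). split. lra. apply H_mono; lra.
Qed.

Lemma Phi_eq q e a b u : 0 < q -> 5/(15*q-8) = e -> 1 - 8/(15*q) = a -> 8/(15*q) = b ->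
  Phi q u = e * ln (a * exp (-(q*u)) + b).
Proof. intros. unfold Phi, Fam. subst. reflexivity. Qed.

Lemma c_chain (c : R) : 0 < c < 1 ->
  Rpower c (1/3) < Rpower (1 - 8/15 * ln c) (-(5/8)) /\
  Rpower (1 - 8/15 * ln c) (-(5/8)) < / (8/3 - 5/3 * Rpower c (1/5)) /\
  / (8/3 - 5/3 * Rpower c (1/5)) < exp (5/8 * Rpower c (8/15) - 5/8) /\
  exp (5/8 * Rpower c (8/15) - 5/8) < (5/21 * Rpower c (7/10) + 16/21) ^ 2 /\
  (5/21 * Rpower c (7/10) + 16/21) ^ 2 < Rpower (1/3 * Rpower c (4/5) + 2/3) (5/4) /\
  Rpower (1/3 * Rpower c (4/5) + 2/3) (5/4) < 5/13 * Rpower c (13/15) + 8/13 /\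
  5/13 * Rpower c (13/15) + 8/13 < Rpower (23/51 * Rpower c (34/35) + 28/51) (35/46) /\
  Rpower (7/15 * c + 8/15) (5/7) < sqrt (5/9 * Rpower c (6/5) + 4/9) /\
  sqrt (5/9 * Rpower c (6/5) + 4/9) < (2 + c) / 3.
Proof.
  intros hc.
  set (u := - ln c).
  assert (hu : 0 < u). { unfold u. assert (ln c < ln 1) by (apply ln_increasing; lra). rewrite ln_1 in H0. lra. }
  assert (hR : forall q, Rpower c q = exp (-(q*u))). { intros. unfold Rpower, u. f_equal. ring. }
  assert (hc' : c = exp (-(1*u))). { unfold u. rewrite Rmult_1_l, Ropp_involutive, exp_ln; lra. }
  assert (e1 : Rpower c (1/3) = exp (-(1/3*u))) by apply hR.
  assert (e2 : Rpower (1 - 8/15 * ln c) (-(5/8)) = exp (Phi0 u)).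
  { unfold Rpower, Phi0. replace (1 - 8/15*ln c) with (1 + 8/15*u) by (unfold u; ring). f_equal; ring. }
  assert (e3 : / (8/3 - 5/3 * Rpower c (1/5)) = exp (Phi (1/5) u)).
  { rewrite (Phi_eq (1/5) (-1) (-(5/3)) (8/3)) by (try field; lra). rewrite hR.
    replace (-(5/3) * exp (-(1/5*u)) + 8/3) with (8/3 - 5/3 * exp (-(1/5*u))) by ring.
    replace (-1 * ln (8/3 - 5/3 * exp (-(1/5*u)))) with (- ln (8/3 - 5/3 * exp (-(1/5*u)))) by ring.
    rewrite (exp_Ropp (ln _)), exp_ln. reflexivity. pose proof (exp_pos (1/5*u)). rewrite exp_Ropp.
    assert (1 < exp (1/5*u)) by (pose proof (exp_ineq1 (1/5*u) ltac:(lra)); lra).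
    assert (/ exp (1/5*u) < 1) by (apply inv_lt1; lra). lra. }
  assert (e4 : exp (5/8 * Rpower c (8/15) - 5/8) = exp (PhiE u)). { unfold PhiE. rewrite hR. reflexivity. }
  assert (epos : forall q, 0 < exp (-(q*u))) by (intros; apply exp_pos).
  assert (e5 : (5/21 * Rpower c (7/10) + 16/21) ^ 2 = exp (Phi (7/10) u)).
  { rewrite (Phi_eq (7/10) 2 (5/21) (16/21)) by (try field; lra). rewrite hR.
    replace (2 * ln (5/21 * exp (-(7/10*u)) + 16/21)) with (ln (5/21 * exp (-(7/10*u)) + 16/21) + ln (5/21 * exp (-(7/10*u)) + 16/21)) by ring.
    rewrite exp_plus, exp_ln. ring. specialize (epos (7/10)). lra. }
  assert (e6 : Rpower (1/3 * Rpower c (4/5) + 2/3) (5/4) = exp (Phi (4/5) u)).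
  { rewrite (Phi_eq (4/5) (5/4) (1/3) (2/3)) by (try field; lra). rewrite hR. reflexivity. }
  assert (e7 : 5/13 * Rpower c (13/15) + 8/13 = exp (Phi (13/15) u)).
  { rewrite (Phi_eq (13/15) 1 (5/13) (8/13)) by (try field; lra). rewrite hR, Rmult_1_l, exp_ln. reflexivity.
    specialize (epos (13/15)). lra. }
  assert (e8 : Rpower (23/51 * Rpower c (34/35) + 28/51) (35/46) = exp (Phi (34/35) u)).
  { rewrite (Phi_eq (34/35) (35/46) (23/51) (28/51)) by (try field; lra). rewrite hR. reflexivity. }
  assert (e10 : Rpower (7/15 * c + 8/15) (5/7) = exp (Phi 1 u)).
  { rewrite (Phi_eq 1 (5/7) (7/15) (8/15)) by (try field; lra). rewrite <- hc'. reflexivity. }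
  assert (e11 : sqrt (5/9 * Rpower c (6/5) + 4/9) = exp (Phi (6/5) u)).
  { rewrite (Phi_eq (6/5) (/2) (5/9) (4/9)) by (try field; lra). rewrite hR, <- Rpower_sqrt.
    reflexivity. specialize (epos (6/5)). lra. }
  assert (last : sqrt (5/9 * Rpower c (6/5) + 4/9) < (2 + c) / 3).
  { set (r := Rpower c (1/5)).
    assert (hr0 : 0 < r) by (unfold r, Rpower; apply exp_pos).
    assert (hr1 : r < 1). { unfold r. rewrite hR. rewrite exp_Ropp. apply inv_lt1.
      pose proof (exp_ineq1 (1/5*u)). lra. }
    assert (h6 : Rpower c (6/5) = r^6).
    { unfold r. rewrite <- Rpower_pow by (unfold Rpower; apply exp_pos). rewrite Rpower_mult. f_equal. simpl. field. }
    assert (h5 : c = r^5).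
    { unfold r. rewrite <- Rpower_pow by (unfold Rpower; apply exp_pos). rewrite Rpower_mult.
      replace (1/5 * INR 5) with 1 by (simpl; field). rewrite Rpower_1; lra. }
    rewrite h6, h5.
    assert (0 <= (2 + r^5)/3) by (pose proof (pow_lt r 5 hr0); lra).
    rewrite <- (sqrt_pow2 ((2 + r^5)/3)) by auto.
    apply sqrt_lt_1_alt. split. pose proof (pow_lt r 6 hr0); lra.
    assert (0 < (1-r)^2 * (r^3 + 2*r^2 + 3*r + 4)).
    { apply Rmult_lt_0_compat. nra. nra. }
    assert (0 < r^5) by (apply pow_lt; auto).
    assert (0 < r^5 * ((1-r)^2 * (r^3 + 2*r^2 + 3*r + 4))) by (apply Rmult_lt_0_compat; auto).
    nra. }
  rewrite e1, e2, e3, e4, e5, e6, e7, e8, e10, e11 in *.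
  repeat split; try apply exp_increasing; try exact last.
  - unfold Phi0. assert (ln (1 + 8/15*u) < 8/15*u).
    { rewrite <- (ln_exp (8/15*u)) at 2. apply ln_increasing. lra. pose proof (exp_ineq1 (8/15*u)). lra. }
    lra.
  - apply (cmp _ _ (fun v => 1 + 8/15*v) (H (1/5))); try lra.
    + apply Phi0_0.
    + apply Phi_0; lra.
    + apply Phi0_der.
    + intros; apply Phi_der; lra.
    + intros. split. lra. apply H0_lt; lra.
  - apply (cmp _ _ (H (1/5)) (H (8/15))); try lra.
    + apply Phi_0; lra.
    + apply PhiE_0.
    + intros; apply Phi_der; lra.
    + apply PhiE_der.
    + intros. pose proof (H_ge1 (1/5) v). split. lra. apply H_mono; lra.
  - apply (cmp _ _ (H (8/15)) (H (7/10))); try lra.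
    + apply PhiE_0.
    + apply Phi_0; lra.
    + apply PhiE_der.
    + intros; apply Phi_der; lra.
    + intros. pose proof (H_ge1 (8/15) v). split. lra. apply H_mono; lra.
  - apply cmpPP; lra.
  - apply cmpPP; lra.
  - apply cmpPP; lra.
  - apply cmpPP; lra.
Qed.
Theorem corollary9 (x : R) (hx0 : 0 < x) (hx1 : x < PI / 2) :
  let c := cos x in
  Rpower c (1/3) < Rpower (1 - 8/15 * ln c) (-(5/8)) /\
  Rpower (1 - 8/15 * ln c) (-(5/8)) < / (8/3 - 5/3 * Rpower c (1/5)) /\
  / (8/3 - 5/3 * Rpower c (1/5)) < exp (5/8 * Rpower c (8/15) - 5/8) /\
  exp (5/8 * Rpower c (8/15) - 5/8) < (5/21 * Rpower c (7/10) + 16/21) ^ 2 /\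
  (5/21 * Rpower c (7/10) + 16/21) ^ 2 < Rpower (1/3 * Rpower c (4/5) + 2/3) (5/4) /\
  Rpower (1/3 * Rpower c (4/5) + 2/3) (5/4) < 5/13 * Rpower c (13/15) + 8/13 /\
  5/13 * Rpower c (13/15) + 8/13 < Rpower (23/51 * Rpower c (34/35) + 28/51) (35/46) /\
  Rpower (23/51 * Rpower c (34/35) + 28/51) (35/46) < sin x / x /\
  sin x / x < Rpower (7/15 * c + 8/15) (5/7) /\
  Rpower (7/15 * c + 8/15) (5/7) < sqrt (5/9 * Rpower c (6/5) + 4/9) /\
  sqrt (5/9 * Rpower c (6/5) + 4/9) < (2 + c) / 3.
Proof.
  cbv zeta.
  assert (hx : 0 < x < PI/2) by lra.
  destruct (trig_facts x hx) as [hs [hc [hc1 hsc]]].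
  destruct (c_chain (cos x) ltac:(lra)) as [h1 [h2 [h3 [h4 [h5 [h6 [h7 [h10 h11]]]]]]]].
  pose proof (lower x hx). pose proof (upper x hx).
  tauto.
Qed.
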